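(* Let $\Sigma$ be a non-empty finite or countably infinite alphabet, let $\mu_p$ be the probability map induced by a Bernoulli distribution $p$ on $\Sigma$, and let $\alpha\in\Sigma^\omega$ be $\mu_p$-distributed. The following are equivalent: (i) for every strongly connected DFA $A$ over $\Sigma$, if $A[\alpha]$ is infinite then $A[\alpha]$ is $\mu_p$-distributed; (ii) for every strongly connected DFA $A$ over $\Sigma$ and every $a\in\Sigma$, if $A[\alpha]$ is infinite then the limiting frequency $\lim_{N\to\infty}\#_a(A[\alpha]|_{\le N})/N$ exists and equals $p(a)$.
   Context: $\mu_p(a_1\cdots a_n)=\prod_i p(a_i)$ for $p:\Sigma\to[0,1]$ with $\sum_ap(a)=1$. $\#_w(v)$ counts occurrences of $w$ as a contiguous block in $v$; $\beta|_{\le N}$ is the length-$N$ prefix of $\beta$; $\beta\in\Sigma^\omega$ is $\mu_p$-distributed if $\lim_N\#_w(\beta|_{\le N})/N=\mu_p(w)$ for all $w\in\Sigma^+$. A DFA over $\Sigma$ has finitely many states, total transition function $\delta$, start state $q_s$ and accepting set $F$; $A[\alpha]$ is the subsequence of those $\alpha_i$ with $\delta^*(q_s,\alpha_1\cdots\alpha_{i-1})\in F$. $A$ is strongly connected if its underlying directed graph (edges $q\to\delta(q,a)$) is strongly connected. *)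

(* Defs.v *)
From HB Require Import structures.
From mathcomp Require Import all_boot all_order all_algebra.
From mathcomp Require Import all_classical all_reals all_analysis.
Set Implicit Arguments. Unset Strict Implicit. Unset Printing Implicit Defensive.
Import Order.TTheory GRing.Theory Num.Theory numFieldNormedType.Exports.
Local Open Scope classical_set_scope.
Local Open Scope ring_scope.

Record dfa (Sigma : Type) := Dfa {
  state : finType;
  delta : state -> Sigma -> state;
  start : state;
  accept : {set state}
}.

Definition delta_star (Sigma : Type) (A : dfa Sigma) (q : state A) (w : seq Sigma)
  : state A := foldl (@delta Sigma A) q w.

Definition strongly_connected (Sigma : Type) (A : dfa Sigma) : Prop :=
  forall q q' : state A, exists w : seq Sigma, delta_star q w = q'.

Definition wprefix (Sigma : Type) (beta : nat -> Sigma) (N : nat) : seq Sigma :=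
  [seq beta i | i <- iota 0 N].

Definition count_occ (Sigma : eqType) (w v : seq Sigma) : nat :=
  count (fun i => take (size w) (drop i v) == w) (iota 0 (size v)).

Definition mu (R : realType) (Sigma : Type) (p : Sigma -> R) (w : seq Sigma) : R :=
  \prod_(a <- w) p a.

Definition bernoulli_dist (R : realType) (Sigma : countType) (p : Sigma -> R) : Prop :=
  (forall a, 0 <= p a <= 1) /\ (\esum_(a in [set: Sigma]) (p a)%:E = 1%E).

Definition mu_distributed (R : realType) (Sigma : eqType) (p : Sigma -> R)
  (beta : nat -> Sigma) : Prop :=
  forall w : seq Sigma, w != [::] ->
    (fun N : nat => (count_occ w (wprefix beta N))%:R / N%:R : R) @ \oo --> (mu p w : R).

(* position i (0-indexed) is selected iff the state after reading
   alpha_0 ... alpha_{i-1} is accepting *)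
Definition selected (Sigma : Type) (A : dfa Sigma) (alpha : nat -> Sigma) (i : nat) : bool :=
  delta_star (start A) (wprefix alpha i) \in accept A.

Definition sel_prefix (Sigma : Type) (A : dfa Sigma) (alpha : nat -> Sigma) (k : nat)
  : seq Sigma := [seq alpha i | i <- iota 0 k & selected A alpha i].

Definition sel_infinite (Sigma : Type) (A : dfa Sigma) (alpha : nat -> Sigma) : Prop :=
  forall n, exists k, (n < size (sel_prefix A alpha k))%N.

(* A[alpha] as an infinite word: its n-th letter is the n-th letter of any
   sufficiently long sel_prefix (these are prefixes of each other).  Only
   meaningful when A[alpha] is infinite; default alpha 0 otherwise. *)
Definition dfa_select (Sigma : Type) (A : dfa Sigma) (alpha : nat -> Sigma) (n : nat)
  : Sigma :=
  match pselect (exists k, (n < size (sel_prefix A alpha k))%N) with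
  | left h => nth (alpha 0%N) (sel_prefix A alpha (ex_minn h)) n
  | right _ => alpha 0%N
  end.

(* Main.v *)
Require Import Defs.
From HB Require Import structures.
From mathcomp Require Import all_boot all_order all_algebra.
From mathcomp Require Import all_classical all_reals all_analysis.
Import Order.TTheory GRing.Theory Num.Theory numFieldNormedType.Exports.
Local Open Scope classical_set_scope.
Local Open Scope ring_scope.
Section Lim.
Variable R : realType.

Lemma cst_div_cvg0 (d : nat) :
  (fun N : nat => (d%:R / N%:R : R)) @ \oo --> (0 : R).
Proof.
apply/cvgrPdist_le => e e0.
near=> N.
rewrite sub0r normrN ger0_norm ?divr_ge0 //.
have N0 : (0 : R) < N%:R.
  rewrite ltr0n; near: N; exact: nbhs_infty_gt.
rewrite ler_pdivrMr //.
rewrite -ler_pdivrMl // mulrC.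
near: N; exact: nbhs_infty_ger.
Unshelve. all: end_near. Qed.

Lemma bdiff_cvg (a b : nat -> nat) (d : nat) (L : R) :
  (forall N, (a N <= b N + d)%N) -> (forall N, (b N <= a N + d)%N) ->
  (fun N : nat => ((a N)%:R / N%:R : R)) @ \oo --> L ->
  (fun N : nat => ((b N)%:R / N%:R : R)) @ \oo --> L.
Proof.
move=> hab hba ha.
have -> : (fun N : nat => ((b N)%:R / N%:R : R)) =
  (fun N => (a N)%:R / N%:R + ((b N)%:R - (a N)%:R) / N%:R).
  by apply: funext => N; rewrite -mulrDl addrCA subrr addr0.
rewrite -[L]addr0; apply: cvgD => //.
apply: (@squeeze_cvgr _ _ _ _ (fun N => - (d%:R / N%:R)) (fun N => d%:R / N%:R)).
- near=> N.
  have N0 : (0 : R) <= N%:R by [].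
  rewrite -mulNr !ler_wpM2r ?invr_ge0 //.
    by rewrite lerBlDr -natrD ler_nat addnC hba.
  by rewrite lerNl opprB lerBlDr -natrD ler_nat addnC hab.

- have := cvgN (cst_div_cvg0 d); rewrite oppr0; exact.
- exact: cst_div_cvg0.
Unshelve. all: end_near. Qed.

End Lim.
Section Sel.
Variable Sigma : eqType.
Implicit Types (A : dfa Sigma) (alpha beta : nat -> Sigma).

Lemma wprefixS beta k : wprefix beta k.+1 = rcons (wprefix beta k) (beta k).
Proof. by rewrite /wprefix -addn1 iotaD map_cat cats1. Qed.

Lemma size_wprefix beta k : size (wprefix beta k) = k.
Proof. by rewrite size_map size_iota. Qed.

Lemma nth_wprefix beta k i x0 : (i < k)%N -> nth x0 (wprefix beta k) i = beta i.
Proof. by move=> ik; rewrite (nth_map 0%N) ?size_iota // nth_iota. Qed.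

Lemma sel_prefixS A alpha k : sel_prefix A alpha k.+1 =
  sel_prefix A alpha k ++ (if selected A alpha k then [:: alpha k] else [::]).
Proof.
rewrite /sel_prefix -addn1 iotaD filter_cat map_cat /= add0n.
by case: (selected A alpha k).
Qed.

Lemma sel_prefix_cat A alpha k m : exists s,
  sel_prefix A alpha (k + m) = sel_prefix A alpha k ++ s.
Proof.
elim: m => [|m [s IH]]; first by exists [::]; rewrite addn0 cats0.
exists (s ++ (if selected A alpha (k + m) then [:: alpha (k + m)] else [::])).
by rewrite addnS sel_prefixS IH catA.
Qed.

Lemma sel_prefix_nth A alpha k1 k2 i x0 :
  (i < size (sel_prefix A alpha k1))%N -> (i < size (sel_prefix A alpha k2))%N ->
  nth x0 (sel_prefix A alpha k1) i = nth x0 (sel_prefix A alpha k2) i.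
Proof.
wlog le12 : k1 k2 / (k1 <= k2)%N.
  move=> H h1 h2; case: (leqP k1 k2) => [le|/ltnW le]; first exact: H.
  by symmetry; apply: H.
move=> h1 _; have [s] := sel_prefix_cat A alpha k1 (k2 - k1).
rewrite subnKC // => ->.
by rewrite nth_cat h1.
Qed.

Lemma wprefix_select A alpha N k :
  (N <= size (sel_prefix A alpha k))%N ->
  wprefix (dfa_select A alpha) N = take N (sel_prefix A alpha k).
Proof.
move=> Nk; apply: (@eq_from_nth _ (alpha 0%N)).
  by rewrite size_wprefix size_take; move: Nk; rewrite leq_eqVlt => /orP[/eqP->|->//]; rewrite ltnn.
move=> i; rewrite size_wprefix => iN.
rewrite nth_wprefix // nth_take //.
rewrite /dfa_select; case: pselect => [h|[]]; last by exists k; exact: leq_trans iN Nk.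
case: (ex_minnP h) => m hm _.
by apply: sel_prefix_nth => //; exact: leq_trans iN Nk.
Qed.

Definition js A alpha k := size (sel_prefix A alpha k).

Lemma sel_prefix_wprefix A alpha k :
  sel_prefix A alpha k = wprefix (dfa_select A alpha) (js A alpha k).
Proof. by rewrite (@wprefix_select A alpha _ k (leqnn _)) take_size. Qed.

Lemma jsS A alpha k : js A alpha k.+1 = (js A alpha k + selected A alpha k)%N.
Proof. by rewrite /js sel_prefixS size_cat; case: selected. Qed.

Lemma select_js A alpha k : selected A alpha k ->
  alpha k = dfa_select A alpha (js A alpha k).
Proof.
move=> sk; have := sel_prefix_wprefix A alpha k.+1.
rewrite sel_prefixS sk jsS sk addn1 wprefixS => /eqP.
by rewrite sel_prefix_wprefix cats1 eqseq_rcons => /andP[_ /eqP].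
Qed.

Lemma js_surj A alpha : sel_infinite A alpha -> forall N, exists k, js A alpha k = N.
Proof.
move=> inf N; have [k2 hk2] := inf N.
have : (js A alpha 0 <= N <= js A alpha (0 + k2))%N.
  by rewrite /js /sel_prefix /= ltnW.
elim: k2 {hk2} => [|m IH]; first by rewrite addn0 => /andP[a b]; exists 0%N; apply/eqP; rewrite eqn_leq a b.
move=> /andP[h0 h1]; move: h1; rewrite addnS jsS leq_eqVlt => /orP[/eqP ->|].
  by exists (0 + m).+1; rewrite jsS.
move=> h; case: (leqP N (js A alpha (0 + m))) => h'.
  by apply: IH; rewrite h0 h'.
exfalso; move: h h'; case: selected; rewrite ?addn1 ?addn0 ?ltnS => h h'.
  by move: h'; rewrite ltnNge h.
by move: h'; rewrite ltnNge ltnW.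
Qed.

End Sel.
Arguments js {Sigma}.
Section Mem.
Variable Sigma : eqType.
Variable u : seq Sigma.

Definition upd (M : {set 'I_(size u).+1}) (x : Sigma) : {set 'I_(size u).+1} :=
  [set j : 'I_(size u).+1 | (val j == 0%N) || ((inord j.-1 \in M) && (nth x u j.-1 == x))]%SET.

Lemma upd0 (M0 : {set 'I_(size u).+1}) (s : seq Sigma) : ord0 \in M0 -> ord0 \in foldl upd M0 s.
Proof.
elim/last_ind: s => [//|s x IH] h; rewrite foldl_rcons inE; by [].
Qed.

Lemma upd_sem (M0 : {set 'I_(size u).+1}) (s : seq Sigma) (j : 'I_(size u).+1) : ord0 \in M0 -> (j <= size s)%N ->
  (j \in foldl upd M0 s) = (drop (size s - j) s == take j u).
Proof.
move=> h0; elim/last_ind: s j => [|s x IH] j.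
  rewrite leqn0 => /eqP j0; have -> : j = ord0 by apply: val_inj.
  by rewrite h0 /= take0.
rewrite size_rcons foldl_rcons inE; case: j => [[|j'] hj] /=.
  by move=> _; rewrite subn0 drop_oversize ?size_rcons // take0.
rewrite ltnS => js.
have hj' : (j' < (size u).+1)%N by apply: ltnW.
have := IH (Ordinal hj') js; rewrite /= => IHj.
have -> : (inord j' : 'I_(size u).+1) = Ordinal hj' by apply: val_inj; rewrite /= inordK.
rewrite IHj subSS drop_rcons ?leq_subr // (take_nth x) // eqseq_rcons.
by rewrite [x == _]eq_sym.
Qed.

Lemma upd_indep (M0 M1 : {set 'I_(size u).+1}) (s : seq Sigma) : ord0 \in M0 -> ord0 \in M1 -> (size u <= size s)%N ->
  foldl upd M0 s = foldl upd M1 s.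
Proof.
move=> h0 h1 hs; apply/setP => j.
have js : (j <= size s)%N by apply: leq_trans hs; rewrite -ltnS.
by rewrite !upd_sem.
Qed.

End Mem.
Section Prod.
Variable Sigma : eqType.
Variable A : dfa Sigma.
Variable u : seq Sigma.
Local Notation mem := {set 'I_(size u).+1}.

Lemma delta_star_cat (q : state A) w1 w2 :
  delta_star q (w1 ++ w2) = delta_star (delta_star q w1) w2.
Proof. by rewrite /delta_star foldl_cat. Qed.

Fixpoint sl (q : state A) (w : seq Sigma) : seq Sigma :=
  if w is x :: w' then (if q \in accept A then [:: x] else [::]) ++ sl (delta q x) w'
  else [::].

Lemma sl_cat q w1 w2 : sl q (w1 ++ w2) = sl q w1 ++ sl (delta_star q w1) w2.
Proof. by elim: w1 q => [|x w IH] q //=; rewrite IH catA. Qed.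

Definition bstep (qm : state A * mem) (x : Sigma) : state A * mem :=
  (delta qm.1 x, if qm.1 \in accept A then @upd _ u qm.2 x else qm.2).

Lemma foldl_bstep q (M : mem) w :
  foldl bstep (q, M) w = (delta_star q w, foldl (@upd _ u) M (sl q w)).
Proof.
elim: w q M => [|x w IH] q M //=; rewrite /bstep /= IH.
by case: (q \in accept A).
Qed.

Definition inW (qm : state A * mem) : Prop :=
  exists q0 w, qm = (delta_star q0 w, foldl (@upd _ u) [set ord0]%SET (sl q0 w))
               /\ (size u <= size (sl q0 w))%N.

Definition Wset : {set (state A * mem)} := [set qm | `[< inW qm >]]%SET.

Lemma W_step qm x : qm \in Wset -> bstep qm x \in Wset.
Proof.
rewrite !inE => -[q0 [w [-> h]]]; exists q0, (rcons w x).
rewrite -cats1 sl_cat delta_star_cat foldl_cat size_cat; split.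
  by rewrite /bstep /=; case: (_ \in accept A).
exact: leq_trans h (leq_addr _ _).
Qed.

Definition Dstate := {qm : state A * mem | qm \in Wset}.

Definition Dstep (s : Dstate) (x : Sigma) : Dstate :=
  exist _ (bstep (val s) x) (@W_step (val s) x (valP s)).

Definition Daccept : {set Dstate} :=
  [set s : Dstate | ((val s).1 \in accept A) && (ord_max \in (val s).2)]%SET.

Definition mkD (s0 : Dstate) : dfa Sigma := @Dfa Sigma _ Dstep s0 Daccept.

Lemma val_Dstar s0 (s : Dstate) w :
  val (delta_star (A := mkD s0) s w) = foldl bstep (val s) w.
Proof. by elim: w s => [|x w IH] s //=; rewrite /delta_star /= -/(delta_star _ _) IH. Qed.

Lemma D_sc s0 : strongly_connected A -> strongly_connected (mkD s0).
Proof.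
move=> sc x y.
case: y => [[q M] hy]; have : inW (q, M) by move: hy; rewrite inE => /asboolP.
move=> -[q0 [w [eqy hw]]].
case: x => [[q1 M1] hx]; have : inW (q1, M1) by move: hx; rewrite inE => /asboolP.
move=> -[q2 [w2 [eqx _]]].
have h1 : ord0 \in M1 by case: eqx => _ ->; apply: upd0; rewrite set11.
have [v hv] := sc q1 q0.
exists (v ++ w); apply: val_inj; rewrite val_Dstar /= foldl_bstep eqy sl_cat foldl_cat.
rewrite delta_star_cat hv; congr pair; apply: upd_indep => //.
  exact: upd0.
by rewrite set11.
Qed.

Lemma sl_sel alpha k : sl (start A) (wprefix alpha k) = sel_prefix A alpha k.
Proof.
elim: k => [//|k IH]; rewrite wprefixS -cats1 sl_cat IH sel_prefixS /=.
by rewrite /selected cats0.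
Qed.

Lemma selD alpha s0 M0 : val s0 = (start A, M0) -> forall i,
  selected (mkD s0) alpha i =
  selected A alpha i && (ord_max \in foldl (@upd _ u) M0 (sel_prefix A alpha i)).
Proof.
move=> h0 i; rewrite /selected inE val_Dstar /= h0 foldl_bstep /= sl_sel.
by [].
Qed.

Lemma W_start (x : Sigma) : strongly_connected A -> (exists q, q \in accept A) ->
  exists M, (start A, M) \in Wset.
Proof.
move=> sc [qa ha].
have [v1 h1] := sc (start A) qa.
have [v2 h2] := sc (delta qa x) (start A).
pose z := v1 ++ x :: v2.
have hz : delta_star (start A) z = start A by rewrite delta_star_cat h1.
have sz : (1 <= size (sl (start A) z))%N.
  by rewrite sl_cat h1 /= ha size_cat /= addnS.
have loop : forall m, exists w, delta_star (start A) w = start A /\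
    (m <= size (sl (start A) w))%N.
  elim=> [|m [w [hw hm]]]; first by exists [::].
  exists (w ++ z); rewrite delta_star_cat hw hz sl_cat hw size_cat; split => //.
  by rewrite -addn1 leq_add.
have [w [hw hm]] := loop (size u).
exists (foldl (@upd _ u) [set ord0]%SET (sl (start A) w)).
by rewrite inE; apply/asboolP; exists (start A), w; rewrite hw.
Qed.

End Prod.
From mathcomp Require Import zify.
Section Count.
Local Open Scope nat_scope.
Variable Sigma : eqType.

Lemma size_take_min' (T : Type) (n : nat) (s : seq T) : size (take n s) = minn n (size s).
Proof. by rewrite size_take_min. Qed.

Lemma count_occE (beta : nat -> Sigma) (w : seq Sigma) N : (0 < size w)%N ->
  count_occ w (wprefix beta N) =
  count (fun i => [seq beta k | k <- iota i (size w)] == w) (iota 0 (N.+1 - size w)).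
Proof.
move=> w0; rewrite /count_occ size_wprefix.
have hle : (N.+1 - size w <= N)%N by lia.
rewrite -[X in count _ (iota 0 X) = _](subnKC hle) iotaD count_cat.
rewrite [X in (_ + X)%N](@eq_in_count _ _ pred0) ?count_pred0 ?addn0.
  apply: eq_in_count => i; rewrite mem_iota add0n => /= hi.
  rewrite /wprefix -map_drop -map_take drop_iota take_iota add0n.
  by have -> : minn (size w) (N - i) = size w by lia.
move=> i; rewrite mem_iota add0n => /andP[h1 h2] /=; apply/negbTE/eqP => e.
have := congr1 size e; rewrite size_take_min size_drop size_wprefix.
move: h1 h2; lia.
Qed.

Lemma count_occ1 (c : Sigma) s : count_occ [:: c] s = count (pred1 c) s.
Proof.
rewrite /count_occ -[in RHS](mkseq_nth c s) /mkseq count_map.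
apply: eq_in_count => i; rewrite mem_iota add0n /= => hi.
by rewrite (drop_nth c) //= take0 eqseq_cons andbT eq_sym.
Qed.

Lemma count_iota_split (P : pred nat) n m :
  count P (iota 0 (n + m)) = (count P (iota 0 n) + count (fun i => P (n + i)) (iota 0 m))%N.
Proof.
by rewrite iotaD count_cat add0n -[in iota n m](addn0 n) iotaDl count_map.
Qed.

End Count.
Section Step.
Variable R : realType.
Variable Sigma : eqType.
Variables (beta : nat -> Sigma) (u : seq Sigma) (c : Sigma).
Variable M0 : {set 'I_(size u).+1}.
Hypothesis h0 : ord0 \in M0.
Hypothesis hu : (0 < size u)%N.

Definition occ i := [seq beta k | k <- iota i (size u)] == u.
Definition Tp j := ord_max \in foldl (@upd _ u) M0 (wprefix beta j).
Definition Kp N := count Tp (iota 0 N).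
Definition Cp N := count (fun j => Tp j && (beta j == c)) (iota 0 N).

Lemma Tp_occ j : (size u <= j)%N -> Tp j = occ (j - size u).
Proof.
move=> hj; rewrite /Tp upd_sem //= ?size_wprefix // take_size.
by rewrite /wprefix -map_drop drop_iota add0n subKn.
Qed.

Lemma Tp_occ' i : Tp (size u + i) = occ i.
Proof. by rewrite Tp_occ ?leq_addr // addKn. Qed.

Lemma P_eq N : count_occ u (wprefix beta N) = count occ (iota 0 (N.+1 - size u)).
Proof. by rewrite count_occE. Qed.

Lemma Q_eq N : count_occ (rcons u c) (wprefix beta N) =
  count (fun i => occ i && (beta (size u + i) == c)) (iota 0 (N - size u)).
Proof.
rewrite count_occE size_rcons // subSS; apply: eq_count => i.
by rewrite -[(size u).+1]addn1 iotaD map_cat cats1 eqseq_rcons /= addnC.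
Qed.

Local Open Scope nat_scope.

Lemma Kp_bounds N :
  Kp N <= count_occ u (wprefix beta N) + size u /\
  count_occ u (wprefix beta N) <= Kp N + size u.
Proof.
rewrite P_eq /Kp; case: (leqP N (size u)) => hN.
  have h1 := count_size Tp (iota 0 N); have h2 := count_size occ (iota 0 (N.+1 - size u)).
  rewrite !size_iota in h1 h2; lia.
rewrite -(subnKC (ltnW hN)) count_iota_split.
have -> : (size u + (N - size u)).+1 - size u = (N - size u) + 1 by lia.
rewrite count_iota_split (eq_count (a1 := fun i => Tp (size u + i)) (a2 := occ)); last by move=> i; exact: Tp_occ'.
have h1 := count_size Tp (iota 0 (size u)).
have h2 := count_size (fun i => occ (N - size u + i)) (iota 0 1).
rewrite !size_iota in h1 h2; lia.
Qed.

Lemma Cp_bounds N :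
  Cp N <= count_occ (rcons u c) (wprefix beta N) + size u /\
  count_occ (rcons u c) (wprefix beta N) <= Cp N + size u.
Proof.
rewrite Q_eq /Cp; case: (leqP N (size u)) => hN.
  have h1 := count_size (fun j => Tp j && (beta j == c)) (iota 0 N).
  rewrite size_iota in h1; have -> : N - size u = 0 by lia.
  rewrite /=; lia.
rewrite -(subnKC (ltnW hN)) count_iota_split addKn.
rewrite (eq_count (a1 := fun i => Tp (size u + i) && _)
  (a2 := fun i => occ i && (beta (size u + i) == c))); last by move=> i; rewrite /= Tp_occ'.
have h1 := count_size (fun j => Tp j && (beta j == c)) (iota 0 (size u)).
rewrite !size_iota in h1; lia.
Qed.

Lemma Cp_le_Kp N : Cp N <= Kp N.
Proof. by apply: sub_count => j /andP[]. Qed.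

Lemma Kp_mono N m : Kp N <= Kp (N + m).
Proof. by rewrite /Kp count_iota_split leq_addr. Qed.

Local Close Scope nat_scope.

Lemma step_lim (mu_u pc : R) :
  (fun N => (count_occ u (wprefix beta N))%:R / N%:R) @ \oo --> mu_u ->
  ((forall A, exists N0, forall N, (N0 <= N)%N -> (A <= Kp N)%N) ->
     (fun N => (Cp N)%:R / (Kp N)%:R) @ \oo --> pc) ->
  (fun N => (count_occ (rcons u c) (wprefix beta N))%:R / N%:R) @ \oo --> mu_u * pc.
Proof.
move=> hP H.
have hK : (fun N => (Kp N)%:R / N%:R : R) @ \oo --> mu_u.
  by apply: (@bdiff_cvg R _ _ (size u) _ _ _ hP) => N; case: (Kp_bounds N).
case: (pselect (forall A, exists N0, forall N, (N0 <= N)%N -> (A <= Kp N)%N)) => [unb|bnd].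
  have hCK := H unb.
  have hC : (fun N => (Cp N)%:R / N%:R : R) @ \oo --> pc * mu_u.
    have -> : (fun N => (Cp N)%:R / N%:R : R) =
              (fun N => (Cp N)%:R / (Kp N)%:R * ((Kp N)%:R / N%:R)).
      apply: funext => N; case: (eqVneq (Kp N) 0%N) => hk.
        have : Cp N = 0%N by apply/eqP; rewrite -leqn0 -hk Cp_le_Kp.
        by move=> ->; rewrite hk !mul0r.
      by rewrite mulrA divfK // pnatr_eq0.
    exact: cvgM.
  rewrite mulrC; apply: (@bdiff_cvg R _ _ (size u) _ _ _ hC) => N; case: (Cp_bounds N) => //.
have [A hA] : exists A, forall N, (Kp N < A)%N.
  case: (pselect (exists A, forall N, (Kp N < A)%N)) => // hno; exfalso; apply: bnd => A.
  case: (pselect (exists N0, (A <= Kp N0)%N)) => [[N0 hN0]|hno2].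
    exists N0 => N hN; apply: (leq_trans hN0); rewrite -(subnKC hN); exact: Kp_mono.
  by exfalso; apply: hno; exists A => N; rewrite ltnNge; apply/negP => h; apply: hno2; exists N.
have z0 : (fun N => ((fun _ => 0%N) N)%:R / N%:R : R) @ \oo --> (0 : R).
  by rewrite /=; under eq_fun do rewrite mul0r; exact: cvg_cst.
have hK0 : (fun N => (Kp N)%:R / N%:R : R) @ \oo --> (0 : R).
  apply: (@bdiff_cvg R _ _ A _ _ _ z0) => N //=; exact: ltnW.
have mu0 : mu_u = 0 by first [exact: (cvg_unique _ hK hK0) | exact: (cvg_unique hK hK0) | exact: (cvg_unique _ _ hK hK0)].
have hC0 : (fun N => (Cp N)%:R / N%:R : R) @ \oo --> (0 : R).
  apply: (@bdiff_cvg R _ _ A _ _ _ z0) => N //=; apply: ltnW; exact: leq_ltn_trans (Cp_le_Kp N) (hA N).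
rewrite mu0 mul0r; apply: (@bdiff_cvg R _ _ (size u) _ _ _ hC0) => N; case: (Cp_bounds N) => //.
Qed.

End Step.
Section Link.
Variable Sigma : eqType.
Variables (A : dfa Sigma) (alpha : nat -> Sigma) (u : seq Sigma).
Variables (M0 : {set 'I_(size u).+1}) (s0 : @Dstate Sigma A u).
Hypothesis hs0 : val s0 = (start A, M0).

Local Notation beta := (dfa_select A alpha).
Definition G N := [seq beta j | j <- iota 0 N & @Tp Sigma beta u M0 j].

Lemma GS N : G N.+1 = G N ++ (if @Tp Sigma beta u M0 N then [:: beta N] else [::]).
Proof. by rewrite /G -addn1 iotaD filter_cat map_cat /= add0n; case: Tp. Qed.

Lemma sel_D_G k : sel_prefix (@mkD Sigma A u s0) alpha k = G (js A alpha k).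
Proof.
elim: k => [//|k IH]; rewrite sel_prefixS IH (@selD Sigma A u alpha s0 M0 hs0) jsS.
case sk: (selected A alpha k) => /=; last by rewrite addn0 cats0.
rewrite addn1 GS -(@select_js _ A alpha k sk) (@sel_prefix_wprefix _ A alpha k).
by [].
Qed.

End Link.
Theorem lemma5p3 (R : realType) (Sigma : countType) (p : Sigma -> R)
  (alpha : nat -> Sigma) :
  bernoulli_dist p ->
  mu_distributed p alpha ->
  ((forall A : dfa Sigma, strongly_connected A -> sel_infinite A alpha ->
      mu_distributed p (dfa_select A alpha))
   <->
   (forall A : dfa Sigma, strongly_connected A -> sel_infinite A alpha ->
      forall a : Sigma,
        (fun N : nat =>
           (count_occ [:: a] (wprefix (dfa_select A alpha) N))%:R / N%:R : R)
          @ \oo --> (p a : R))).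
Proof.
move=> _ _; split.
  move=> H A sc inf a; have := H A sc inf [:: a] isT.
  by rewrite /mu big_seq1.
move=> H A sc inf w; elim/last_ind: w => [//|u c IH] _.
case: (eqVneq u [::]) => [->|unil].
  by have := H A sc inf c; rewrite /mu /= big_seq1.
have hu : (0 < size u)%N by rewrite lt0n size_eq0.
have IHu := IH unil.
have hacc : exists q, q \in accept A.
  have [k hk] := inf 0%N.
  move: hk; rewrite /sel_prefix size_map size_filter -has_count => /hasP [i _ hi].
  by exists (delta_star (start A) (wprefix alpha i)).
have [M0 hM0] := @W_start Sigma A u (alpha 0%N) sc hacc.
pose s0 : @Dstate Sigma A u := exist _ (start A, M0) hM0.
have hs0 : val s0 = (start A, M0) by [].
have h0 : ord0 \in M0.
  have : @inW Sigma A u (start A, M0) by move: (hM0); rewrite inE => /asboolP.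
  by case=> q0 [w [[_ ->] _]]; apply: upd0; rewrite set11.
pose beta := dfa_select A alpha.
have -> : mu p (rcons u c) = mu p u * p c by rewrite /mu -cats1 big_cat /= big_seq1.
apply: (@step_lim R Sigma beta u c M0 h0 hu _ _ IHu) => unb.
pose D := @mkD Sigma A u s0.
have scD : strongly_connected D by apply: D_sc.
have infD : sel_infinite D alpha.
  move=> m; have [N0 hN0] := unb m.+1; have [k hk] := @js_surj _ A alpha inf N0.
  exists k; rewrite (@sel_D_G Sigma A alpha u M0 s0 hs0 k) hk /G size_map size_filter.
  exact: hN0.
have hD := H D scD infD c.
have Kinf : (Kp Sigma beta u M0) @ \oo --> \oo.
  apply/cvgnyPge => A0; have [N0 hN0] := unb A0.
  near=> N; apply: hN0; near: N; exact: nbhs_infty_ge.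
suff -> : (fun N => (Cp Sigma beta u c M0 N)%:R / (Kp Sigma beta u M0 N)%:R : R) =
  ((fun K => (count_occ [:: c] (wprefix (dfa_select D alpha) K))%:R / K%:R) \o Kp Sigma beta u M0).
  exact: (cvg_comp _ _ Kinf hD).
apply: funext => N /=.
have [k hk] := @js_surj _ A alpha inf N.
have eG := @sel_D_G Sigma A alpha u M0 s0 hs0 k.
have eK : Kp Sigma beta u M0 N = js D alpha k.
  by rewrite /js eG hk /G size_map size_filter.
rewrite eK -(@sel_prefix_wprefix _ D alpha k) eG hk count_occ1 /G count_map count_filter.
congr (_%:R / _); rewrite /Cp; apply: eq_count => j /=; by rewrite andbC.
Unshelve. all: end_near.
Qed.
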